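(* Let $L$ be a bounded distributive lattice and $f\colon L^n\to L$ an inf-homogeneous and g-comonotone supremal aggregation function. Then $f$ is a Sugeno integral, i.e. $f=\mathsf{Su}_m$ for some $L$-valued capacity $m$ on $[n]$.
   Context: $[n]=\{1,\dots,n\}$. An aggregation function is a monotone $f\colon L^n\to L$ with $f(0,\dots,0)=0$, $f(1,\dots,1)=1$. An $L$-valued capacity is $m\colon2^{[n]}\to L$, monotone, $m(\emptyset)=0$, $m([n])=1$; $\mathsf{Su}_m(\mathbf x)=\bigvee_{I\subseteq[n]}\big(m(I)\wedge\bigwedge_{i\in I}x_i\big)$ (empty meet $=1$). For $c\in L$, $\mathbf c=(c,\dots,c)$; $f$ is inf-homogeneous if $f(\mathbf c\wedge\mathbf x)=c\wedge f(\mathbf x)$ for all $\mathbf x\in L^n,c\in L$. $\mathbf x,\mathbf y$ are g-comonotone if for all $i,j$: $(x_i\vee y_i)\wedge(x_j\vee y_j)=(x_i\wedge x_j)\vee(y_i\wedge y_j)$; $f$ is g-comonotone supremal if $f(\mathbf x\vee\mathbf y)=f(\mathbf x)\vee f(\mathbf y)$ for all g-comonotone $\mathbf x,\mathbf y$. *)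

(* Defs.v *)
From mathcomp Require Import all_boot all_order.
Set Implicit Arguments. Unset Strict Implicit. Unset Printing Implicit Defensive.
Import Order.TTheory.
Local Open Scope order_scope.

Section Defs.
Context {disp : Order.disp_t} {L : tbDistrLatticeType disp} {n : nat}.

Definition cst (c : L) : 'I_n -> L := fun _ => c.

Definition aggregation (f : ('I_n -> L) -> L) : Prop :=
  (forall x y : 'I_n -> L, (forall i, x i <= y i) -> f x <= f y) /\
  f (cst \bot) = \bot /\ f (cst \top) = \top.

Definition capacity (m : {set 'I_n} -> L) : Prop :=
  (forall I J : {set 'I_n}, I \subset J -> m I <= m J) /\
  m set0 = \bot /\ m setT = \top.

Definition sugeno (m : {set 'I_n} -> L) (x : 'I_n -> L) : L :=
  \join_(I : {set 'I_n}) (m I `&` \meet_(i in I) x i).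

Definition inf_homogeneous (f : ('I_n -> L) -> L) : Prop :=
  forall (x : 'I_n -> L) (c : L), f (fun i => c `&` x i) = c `&` f x.

Definition g_comonotone (x y : 'I_n -> L) : Prop :=
  forall i j : 'I_n,
    (x i `|` y i) `&` (x j `|` y j) = (x i `&` x j) `|` (y i `&` y j).

Definition g_comonotone_supremal (f : ('I_n -> L) -> L) : Prop :=
  forall x y : 'I_n -> L, g_comonotone x y ->
    f (fun i => x i `|` y i) = f x `|` f y.
End Defs.

(* Main.v *)
Require Import Defs.
From mathcomp Require Import all_boot all_order.
Import Order.TTheory.
Local Open Scope order_scope.

Section Proof.
Context (disp : Order.disp_t) (L : tbDistrLatticeType disp) (n : nat)
  (f : ('I_n -> L) -> L).
Hypotheses (Ha : aggregation f) (Hi : inf_homogeneous f)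
  (Hs : g_comonotone_supremal f).

Definition ind (I : {set 'I_n}) : 'I_n -> L :=
  fun i => if i \in I then \top else \bot.

Definition mf (I : {set 'I_n}) : L := f (ind I).

Lemma fmono x y : (forall i, x i <= y i) -> f x <= f y.
Proof. by case: Ha => H _; apply: H. Qed.

Lemma fcst c : f (cst c) <= c.
Proof.
have [_ [_ H1]] := Ha.
have E : c `&` f (cst \top) = c by rewrite H1 meetx1.
rewrite -[X in _ <= X]E -Hi; apply: fmono => i; by rewrite /cst meetx1.
Qed.

Lemma fsupc c y : f (fun i => c `|` y i) <= c `|` f y.
Proof.
have -> : (fun i => c `|` y i) = (fun i => cst c i `|` y i) by [].
rewrite Hs; first by rewrite leU2 ?fcst.
by move=> i j; rewrite /cst meetxx joinIr.
Qed.

Definition upd (x : 'I_n -> L) k (v : L) : 'I_n -> L :=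
  fun i => if i == k then v else x i.

Lemma median x k :
  f x <= f (upd x k \bot) `|` (x k `&` f (upd x k \top)).
Proof.
have h1 : f x <= x k `|` f (upd x k \bot).
  apply: le_trans (fsupc _ _); apply: fmono => i; rewrite /upd.
  by case: eqP => [->|_]; [rewrite joinx0|rewrite leUr].
have h2 : f x <= f (upd x k \top).
  by apply: fmono => i; rewrite /upd; case: eqP => _; rewrite ?lex1.
have h3 : f (upd x k \bot) <= f (upd x k \top).
  by apply: fmono => i; rewrite /upd; case: eqP => _; rewrite ?lex1 ?le0x.
have : f x <= (x k `|` f (upd x k \bot)) `&` f (upd x k \top) by rewrite lexI h1 h2.
by rewrite meetUl (meet_idPl h3) joinC.
Qed.

Definition S x := sugeno mf x.

Lemma meet_join_le c (F G : {set 'I_n} -> L) :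
  (forall I, c `&` F I <= G I) ->
  c `&` \join_(I : {set 'I_n}) F I <= \join_(I : {set 'I_n}) G I.
Proof.
move=> H; elim/big_rec: _ => [|I y _ IH]; first by rewrite meetx0 le0x.
rewrite meetUr leUx IH andbT; apply: le_trans (H I) _.
exact: (joins_sup (P := xpredT)).
Qed.

Lemma S_le x :
  forall N (K : {set 'I_n}), #|K| = N ->
  (forall i, i \notin K -> x i = \bot \/ x i = \top) -> f x <= S x.
Proof.
move=> N; elim: N x => [|N IH] x K cK Hx.
  have K0 : K = set0 by apply/eqP; rewrite -cards_eq0 cK.
  pose I := [set i | x i == \top].
  apply: le_trans (_ : mf I `&` \meet_(i in I) x i <= S x).
    rewrite (_ : \meet_(i in I) x i = \top) ?meetx1.
      apply: fmono => i; rewrite /ind inE.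
      have := Hx i; rewrite K0 inE => /(_ isT) [] ->; first by rewrite le0x.
      by rewrite eqxx.
    by apply/eqP; rewrite -le1x; apply/meetsP => i; rewrite inE => /eqP ->.
  exact: (@joins_sup _ _ _ I xpredT (fun I => mf I `&` \meet_(i in I) x i)).
have [k kK] : exists k, k \in K.
  by apply/set0Pn; rewrite -card_gt0 cK.
have cK' : #|K :\ k| = N by rewrite (cardsD1 k K) kK in cK; case: cK.
have Hu v : v = \bot \/ v = \top ->
    forall i, i \notin K :\ k -> upd x k v i = \bot \/ upd x k v i = \top.
  move=> hv i; rewrite /upd in_setD1 negb_and negbK; case: eqP => //= _ iK.
  exact: Hx.
apply: le_trans (median x k) _; rewrite leUx; apply/andP; split.
  apply: le_trans (IH _ _ cK' (Hu _ (or_introl erefl))) _.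
  apply/joinsP => I _; apply: (joins_min (j := I)) => //.
  rewrite leI2 //; apply/meetsP => i iI; apply: (meets_max (j := i)) => //.
  by rewrite /upd; case: eqP => [->|]; rewrite ?le0x.
have h := IH _ _ cK' (Hu _ (or_intror erefl)).
apply: le_trans (leI2 (lexx (x k)) h) _; rewrite /S /sugeno.
apply: meet_join_le => I; rewrite meetCA leI2 //.
apply/meetsP => i iI; rewrite /upd; case: (i =P k) => [->|/eqP ik].
  by rewrite leIl.
apply: leIxr; apply: (meets_max (j := i)) => //.
by rewrite (negbTE ik).
Qed.

Lemma S_ge x : S x <= f x.
Proof.
apply/joinsP => I _.
rewrite meetC /mf -Hi; apply: fmono => i; rewrite /ind.
case: ifP => iI; last by rewrite meetx0 le0x.
by rewrite meetx1 meets_inf.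
Qed.

End Proof.

Theorem corollary1 (disp : Order.disp_t) (L : tbDistrLatticeType disp) (n : nat)
  (f : ('I_n -> L) -> L) :
  aggregation f -> inf_homogeneous f -> g_comonotone_supremal f ->
  exists m : {set 'I_n} -> L, capacity m /\ forall x, f x = sugeno m x.
Proof.
move=> Ha Hi Hs; exists (@mf disp L n f); split.
  case: Ha => Hm [H0 H1]; split; [|split].
  - move=> I J /subsetP IJ; apply: Hm => i; rewrite /ind.
    by case: ifP => iI; rewrite ?(IJ _ iI) ?lexx ?le0x.
  - apply/eqP; rewrite eq_le le0x -H0 andbT; apply: Hm => i.
    by rewrite /ind inE.
  - apply/eqP; rewrite eq_le lex1 -H1 /=; apply: Hm => i.
    by rewrite /ind inE.
move=> x; apply/eqP; rewrite eq_le; apply/andP; split.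
  apply: (@S_le _ _ _ _ Ha Hi Hs x _ setT erefl) => i; by rewrite inE.
exact: S_ge.
Qed.
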